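(* Let $n\ge2$ and let $\mathcal C=X_1\cap\dots\cap X_n\subseteq\mathbb R^{n+1}$ be a tropical complete intersection curve. Then every vertex of $\mathcal C$ has valence 3, i.e. is contained in exactly three edges (bounded or unbounded) of $\mathcal C$.
   Context: Over $(\mathbb R,\max,+)$, a tropical polynomial is $f(x)=\max_{a\in\mathcal A}\{\lambda_a+a\cdot x\}$, $\mathcal A\subseteq\mathbb Z^{m}$ finite, $\lambda_a\in\mathbb R$; Newton polytope $\Delta_f=\operatorname{conv}(\mathcal A)$; lifted polytope $\tilde\Delta_f=\operatorname{conv}\{(a,t):a\in\mathcal A,t\le\lambda_a\}$, whose bounded faces project to a regular lattice subdivision $\operatorname{Subdiv}(f)$ of $\Delta_f$. $V_{tr}(f)$ is the non-linear locus of $f$, a polyhedral complex of pure dimension $m-1$, with a bijection $C\mapsto C^\vee$ from $k$-cells of $V_{tr}(f)$ to $(m-k)$-cells of $\operatorname{Subdiv}(f)$, $C^\vee=\operatorname{conv}\{a:\lambda_a+a\cdot x=f(x)\}$ for $x$ in the relative interior of $C$. $V_{tr}(f)$ is smooth if every maximal cell of $\operatorname{Subdiv}(f)$ is a lattice simplex of volume $1/m!$. For $X_i=V_{tr}(f_i)$, $i=1,\dots,n$, let $U=X_1\cup\dots\cup X_n=V_{tr}(f_1\odot\cdots\odot f_n)$ (the product polynomial has function $f_1+\dots+f_n$), and $\operatorname{Subdiv}_U=\operatorname{Subdiv}(f_1\odot\cdots\odot f_n)$. Since $\tilde\Delta_{f_1\odot\cdots\odot f_n}=\tilde\Delta_{f_1}+\dots+\tilde\Delta_{f_n}$,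 each bounded face decomposes uniquely as a Minkowski sum of bounded faces of the $\tilde\Delta_{f_i}$; projecting gives the privileged representation $\Lambda=\Lambda_1+\dots+\Lambda_n$ of each cell $\Lambda\in\operatorname{Subdiv}_U$, $\Lambda_i\in\operatorname{Subdiv}(f_i)$. Each cell $C$ of $I=X_1\cap\dots\cap X_n$ is uniquely $C_1\cap\dots\cap C_n$ with $C_i$ a cell of $X_i$ containing $C$ in its relative interior; $C$ is a cell of $U$ and $C^\vee\in\operatorname{Subdiv}_U$ has privileged representation $C_1^\vee+\dots+C_n^\vee$. The intersection is transversal if for all $J\subseteq\{1,\dots,n\}$, $|J|\ge2$, $\bigcap_{i\in J}X_i$ has dimension $m-|J|$ and every cell $C$ of it satisfies $\dim C^\vee=\sum_{i\in J}\dim C_i^\vee$ (duals w.r.t. $\bigcup_{i\in J}X_i$). A tropical complete intersection curve is a transversal intersection $\mathcal C=X_1\cap\dots\cap X_n$ of $n\ge 2$ smooth tropical hypersurfaces in $\mathbb R^{n+1}$ (so $m=n+1$); it is a one-dimensional polyhedral complex, some of whose edges are unbounded. *)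

(* Defs.v *)
From HB Require Import structures.
From mathcomp Require Import all_boot all_order all_algebra.
From mathcomp Require Import reals.

Set Implicit Arguments.
Unset Strict Implicit.
Unset Printing Implicit Defensive.

Import Order.TTheory GRing.Theory Num.Theory.
Local Open Scope ring_scope.

(* A tropical polynomial f(x) = max_{a in A} (lambda_a + a.x):
   A = tp_supp (finite, duplicate free), lambda_a = tp_coef a. *)
Record tpoly (R : realType) (m : nat) := TPoly {
  tp_supp : seq 'rV[int]_m;
  tp_coef : 'rV[int]_m -> R;
  tp_uniq : uniq tp_supp }.

Section Trop.
Variables (R : realType).

Definition rvR (m : nat) (a : 'rV[int]_m) : 'rV[R]_m := map_mx (fun z : int => z%:~R) a.

Definition tdot (m : nat) (a : 'rV[int]_m) (x : 'rV[R]_m) : R :=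
  \sum_(j < m) (a ord0 j)%:~R * x ord0 j.

Definition tmon (m : nat) (f : tpoly R m) (a : 'rV[int]_m) (x : 'rV[R]_m) : R :=
  tp_coef f a + tdot a x.

Definition act (m : nat) (f : tpoly R m) (x : 'rV[R]_m) : seq 'rV[int]_m :=
  [seq a <- tp_supp f | all (fun b => tmon f b x <= tmon f a x) (tp_supp f)].

(* x lies on the tropical hypersurface V_tr(f): the maximum is attained
   by at least two distinct monomials (non-linear locus of f). *)
Definition inV (m : nat) (f : tpoly R m) (x : 'rV[R]_m) : Prop :=
  (1 < size (act f x))%N.

Definition in_conv (m : nat) (s : seq 'rV[int]_m) (p : 'rV[R]_m) : Prop :=
  exists w : 'I_(size s) -> R,
    [/\ forall i, 0 <= w i, \sum_i w i = 1 &
        p = \sum_i w i *: rvR (nth 0 s i)].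

(* the cell conv{a : lambda_a + a.x = f(x)} of Subdiv(f) dual to the cell
   of V_tr(f) containing x in its relative interior *)
Definition dual_cell (m : nat) (f : tpoly R m) (x : 'rV[R]_m) : 'rV[R]_m -> Prop :=
  in_conv (act f x).

Definition affdim_ge (m : nat) (P : 'rV[R]_m -> Prop) (k : nat) : Prop :=
  exists p : 'I_k.+1 -> 'rV[R]_m,
    (forall i, P (p i)) /\
    \rank (\matrix_(i < k, j < m) (p (lift ord0 i) ord0 j - p ord0 ord0 j)) = k.

Definition adim (m : nat) (P : 'rV[R]_m -> Prop) (k : nat) : Prop :=
  affdim_ge P k /\ ~ affdim_ge P k.+1.

(* Smoothness: every maximal cell of Subdiv(f) (cells are exactly the
   conv(act f x), x in R^m) is a lattice simplex of volume 1/m!, i.e. it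
   is conv{a_0,..,a_m} with a_i lattice points and |det(a_i - a_0)| = 1. *)
Definition maximal_dual_cell (m : nat) (f : tpoly R m) (x : 'rV[R]_m) : Prop :=
  forall y, (forall p, dual_cell f x p -> dual_cell f y p) ->
            (forall p, dual_cell f y p -> dual_cell f x p).

Definition smooth (m : nat) (f : tpoly R m) : Prop :=
  forall x, maximal_dual_cell f x ->
    exists a : 'I_m.+1 -> 'rV[int]_m,
      [/\ forall i, a i \in act f x,
          forall p, dual_cell f x p <-> in_conv [seq a i | i <- enum 'I_m.+1] p &
          `|\det (\matrix_(i < m, j < m) (a (lift ord0 i) ord0 j - a ord0 ord0 j))| = 1 :> int].

Definition inIJ (n m : nat) (F : 'I_n -> tpoly R m) (J : {set 'I_n}) (x : 'rV[R]_m) : Prop :=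
  forall i, i \in J -> inV (F i) x.

(* the (closed) cell C = /\_{i in J} C_i of /\_{i in J} X_i containing x in
   its relative interior, where C_i is the cell of X_i containing x in its
   relative interior, i.e. C_i = {y | act(f_i, x) is a subset of act(f_i, y)} *)
Definition cellJ (n m : nat) (F : 'I_n -> tpoly R m) (J : {set 'I_n}) (x : 'rV[R]_m)
  : 'rV[R]_m -> Prop :=
  fun y => forall i, i \in J -> {subset act (F i) x <= act (F i) y}.

Definition dual_cellJ (n m : nat) (F : 'I_n -> tpoly R m) (J : {set 'I_n}) (x : 'rV[R]_m)
  : 'rV[R]_m -> Prop :=
  fun p => exists q : 'I_n -> 'rV[R]_m,
    (forall i, i \in J -> dual_cell (F i) x (q i)) /\ p = \sum_(i in J) q i.

Definition complex_dimJ (n m : nat) (F : 'I_n -> tpoly R m) (J : {set 'I_n}) (k : nat) : Prop :=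
  (exists x, inIJ F J x /\ adim (cellJ F J x) k) /\
  (forall x, inIJ F J x -> ~ affdim_ge (cellJ F J x) k.+1).

Definition transversal_inter (n m : nat) (F : 'I_n -> tpoly R m) : Prop :=
  forall J : {set 'I_n}, (2 <= #|J|)%N ->
    complex_dimJ F J (m - #|J|) /\
    (forall x, inIJ F J x ->
       forall d : 'I_n -> nat, (forall i, i \in J -> adim (dual_cell (F i) x) (d i)) ->
         adim (dual_cellJ F J x) (\sum_(i in J) d i)).

Definition is_vertex (n m : nat) (F : 'I_n -> tpoly R m) (v : 'rV[R]_m) : Prop :=
  inIJ F setT v /\ adim (cellJ F setT v) 0.

Definition is_edge (n m : nat) (F : 'I_n -> tpoly R m) (E : 'rV[R]_m -> Prop) : Prop :=
  exists x, [/\ inIJ F setT x, E = cellJ F setT x & adim E 1].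

End Trop.

(* Main.v *)
Require Import Defs.
From HB Require Import structures.
From mathcomp Require Import all_boot all_order all_algebra.
From mathcomp Require Import reals boolp.
From mathcomp Require Import ring lra zify.
Set Implicit Arguments.
Unset Strict Implicit.
Unset Printing Implicit Defensive.
Import Order.TTheory GRing.Theory Num.Theory.
Local Open Scope ring_scope.


Lemma tdotD (R : realType) m (a : 'rV[int]_m) (x y : 'rV[R]_m) :
  tdot a (x + y) = tdot a x + tdot a y.
Proof. by rewrite /tdot -big_split; apply: eq_bigr => j _; rewrite mxE mulrDr. Qed.

Lemma tdotZ (R : realType) m (a : 'rV[int]_m) (e : R) (x : 'rV[R]_m) :
  tdot a (e *: x) = e * tdot a x.
Proof. by rewrite /tdot mulr_sumr; apply: eq_bigr => j _; rewrite mxE mulrCA. Qed.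

Lemma tdotBl (R : realType) m (a b : 'rV[int]_m) (x : 'rV[R]_m) :
  tdot (a - b) x = tdot a x - tdot b x.
Proof.
rewrite /tdot -sumrB; apply: eq_bigr => j _.
by rewrite !mxE intrB mulrBl.
Qed.

Lemma tdot0 (R : realType) m (a : 'rV[int]_m) : tdot a (0 : 'rV[R]_m) = 0.
Proof. by rewrite /tdot big1 // => j _; rewrite mxE mulr0. Qed.

Lemma mem_act (R : realType) m (f : tpoly R m) x a :
  (a \in act f x) = (a \in tp_supp f) && all (fun b => tmon f b x <= tmon f a x) (tp_supp f).
Proof. by rewrite /act mem_filter andbC. Qed.

Lemma act_uniq (R : realType) m (f : tpoly R m) x : uniq (act f x).
Proof. by rewrite filter_uniq // tp_uniq. Qed.

Lemma tmon_shift (R : realType) m (f : tpoly R m) a v (e : R) w :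
  tmon f a (v + e *: w) = tmon f a v + e * tdot a w.
Proof. by rewrite /tmon tdotD tdotZ addrA. Qed.

Lemma ev_seq (R : realType) (X : eqType) (P : X -> R -> Prop) (s : seq X) :
  (forall x, x \in s -> exists2 d : R, 0 < d & forall e, 0 < e -> e <= d -> P x e) ->
  exists2 d : R, 0 < d & forall e, 0 < e -> e <= d -> forall x, x \in s -> P x e.
Proof.
elim: s => [|x s IH] H; first by exists 1.
have [d1 d1p H1] := H x (mem_head _ _).
have [d2 d2p H2] := IH (fun y hy => H y ltac:(by rewrite in_cons hy orbT)).
exists (Num.min d1 d2); first by rewrite lt_min d1p d2p.
move=> e e0; rewrite le_min => /andP[ed1 ed2] y; rewrite in_cons => /orP[/eqP->|hy].
  by apply: H1.
by apply: H2.
Qed.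

Lemma ev_atom (R : realType) (g h : R) : 0 < g ->
  exists2 d : R, 0 < d & forall e, 0 < e -> e <= d -> e * h < g.
Proof.
move=> g0; exists (g / (`|h| + 1)).
  by rewrite divr_gt0 // ltr_pwDr // normr_ge0.
move=> e e0 ed.
have h1 : 0 < `|h| + 1 by rewrite ltr_pwDr // normr_ge0.
apply: (le_lt_trans (ler_norm _)); rewrite normrM (gtr0_norm e0).
apply: (le_lt_trans (ler_wpM2r (normr_ge0 _) ed)).
rewrite mulrAC ltr_pdivrMr // ltr_pM2l //.
by rewrite ltrDl.
Qed.

Lemma act_local (R : realType) m (f : tpoly R m) (v w : 'rV[R]_m) :
  exists2 d : R, 0 < d & forall e, 0 < e -> e <= d -> forall a,
    (a \in act f (v + e *: w)) =
    (a \in act f v) && all (fun b => tdot b w <= tdot a w) (act f v).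
Proof.
pose s := [seq p <- [seq (b, c) | b <- tp_supp f, c <- tp_supp f]
          | tmon f p.2 v < tmon f p.1 v].
have H0 : forall p, p \in s -> exists2 d : R, 0 < d & forall e, 0 < e -> e <= d ->
   (fun p e => tmon f p.2 (v + e *: w) < tmon f p.1 (v + e *: w)) p e.
  move=> p; rewrite mem_filter => /andP[hp _]; rewrite -subr_gt0 in hp.
  have [d d0 H] := ev_atom (tdot p.2 w - tdot p.1 w) hp.
  exists d => // e e0 ed; rewrite !tmon_shift -subr_gt0.
  have := H e e0 ed; rewrite -subr_gt0 => H'.
  by rewrite (_ : _ - _ = tmon f p.1 v - tmon f p.2 v - e * (tdot p.2 w - tdot p.1 w)) //; rewrite mulrBr; ring.
have [d d0 Hd] := ev_seq H0.
exists d => // e e0 ed a.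
have Hs : forall b c, b \in tp_supp f -> c \in tp_supp f -> tmon f c v < tmon f b v ->
    tmon f c (v + e *: w) < tmon f b (v + e *: w).
  move=> b c hb hc hbc; apply: (Hd e e0 ed (b, c)).
  by rewrite mem_filter /= hbc; apply/allpairsP; exists (b, c).
apply/idP/idP.
- rewrite mem_act => /andP[ha /allP hall].
  have hav : a \in act f v.
    rewrite mem_act ha /=; apply/allP => b hb; rewrite leNgt; apply/negP => hlt.
    by have := hall b hb; rewrite leNgt (Hs b a hb ha hlt).
  rewrite hav /=; apply/allP => b hb.
  move: hb hav; rewrite !mem_act => /andP[hb /allP hb2] /andP[_ /allP ha2].
  have eq1 : tmon f b v = tmon f a v by apply/eqP; rewrite eq_le ha2 // hb2.
  have := hall b hb; rewrite !tmon_shift eq1 lerD2l.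
  by rewrite ler_pM2l.
- case/andP => hav /allP hmax; rewrite mem_act.
  move: (hav); rewrite mem_act => /andP[ha /allP ha2]; rewrite ha /=.
  apply/allP => c hc.
  have := ha2 c hc; rewrite le_eqVlt => /orP[/eqP hca|hlt]; last first.
    by apply/ltW/Hs.
  have hcv : c \in act f v.
    rewrite mem_act hc /=; apply/allP => b hb; rewrite hca; exact: ha2.
  rewrite !tmon_shift hca lerD2l ler_pM2l //; exact: hmax.
Qed.


Definition dmx (R : realType) m (a0 : 'rV[int]_m) (s : seq 'rV[int]_m) : 'M[R]_(size s, m) :=
  \matrix_(k < size s, j < m) (rvR R (nth 0 s k) - rvR R a0) 0 j.

Lemma in_conv_vertex (R : realType) m (s : seq 'rV[int]_m) k :
  (k < size s)%N -> in_conv s (rvR R (nth 0 s k)).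
Proof.
move=> hk; exists (fun i : 'I_(size s) => ((i == Ordinal hk) : nat)%:R); split.
- by move=> i; rewrite ler0n.
- by rewrite (bigD1 (Ordinal hk)) //= eqxx big1 ?addr0 // => i /negbTE ->.
- rewrite (bigD1 (Ordinal hk)) //= eqxx scale1r big1 ?addr0 // => i /negbTE ->.
  by rewrite scale0r.
Qed.

Lemma in_conv_trans (R : realType) m (s t : seq 'rV[int]_m) (p : 'rV[R]_m) :
  (forall e, e \in t -> in_conv s (rvR R e)) -> in_conv t p -> in_conv s p.
Proof.
move=> Ht [w [w0 w1 ->]].
have H : forall i : 'I_(size t), exists u : 'I_(size s) -> R,
    [/\ forall k, 0 <= u k, \sum_k u k = 1 & rvR R (nth 0 t i) = \sum_k u k *: rvR R (nth 0 s k)].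
  by move=> i; apply: Ht; apply: mem_nth.
have [u Hu] := fin_all_exists H.
exists (fun k => \sum_i w i * u i k); split.
- move=> k; apply: sumr_ge0 => i _; apply: mulr_ge0 => //.
  by have [] := Hu i.
- rewrite exchange_big /= -[RHS]w1; apply: eq_bigr => i _.
  by rewrite -mulr_sumr; have [_ -> _] := Hu i; rewrite mulr1.
- rewrite (eq_bigr (fun i => \sum_k (w i * u i k) *: rvR R (nth 0 s k))); last first.
    by move=> i _; have [_ _ ->] := Hu i; rewrite scaler_sumr; apply: eq_bigr => k _; rewrite scalerA.
  rewrite exchange_big /=; apply: eq_bigr => k _.
  by rewrite scaler_suml.
Qed.

Lemma in_conv_span (R : realType) m (a0 : 'rV[int]_m) (s : seq 'rV[int]_m) (p : 'rV[R]_m) :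
  in_conv (a0 :: s) p -> exists c : 'rV[R]_(size s), p - rvR R a0 = c *m dmx R a0 s.
Proof.
move=> [w [w0 w1 ->]].
exists (\row_l w (lift ord0 l)).
rewrite mulmx_sum_row.
have -> : rvR R a0 = \sum_i w i *: rvR R a0 by rewrite -scaler_suml w1 scale1r.
rewrite -sumrB big_ord_recl /= subrr add0r; apply: eq_bigr => l _.
rewrite mxE -scalerBr; congr (_ *: _).
by apply/rowP => j; rewrite !mxE.
Qed.

Lemma affdim_le (R : realType) m (P : 'rV[R]_m -> Prop) k : affdim_ge P k -> (k <= m)%N.
Proof. by move=> [p [_ <-]]; apply: rank_leq_col. Qed.

Lemma not_affdim_conv (R : realType) m (a0 : 'rV[int]_m) (s : seq 'rV[int]_m) :
  ~ affdim_ge (@in_conv R _ (a0 :: s)) (size s).+1.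
Proof.
move=> [p [Hp Hr]].
have H : forall k, exists c : 'rV[R]_(size s), p k - rvR R a0 = c *m dmx R a0 s.
  by move=> k; apply: in_conv_span.
have [c Hc] := fin_all_exists H.
pose C := \matrix_(i < (size s).+1) (c (lift ord0 i) - c ord0).
have E : \matrix_(i < (size s).+1, j < m) (p (lift ord0 i) ord0 j - p ord0 ord0 j)
         = C *m dmx R a0 s.
  apply/row_matrixP => i; rewrite row_mul rowK mulmxBl -!Hc.
  by apply/rowP => j; rewrite !mxE; ring.
move: Hr; rewrite E => Hr.
have := mxrankM_maxr C (dmx R a0 s); rewrite Hr => h.
have := leq_trans h (rank_leq_row _); by rewrite ltnn.
Qed.

Lemma affdim_conv (R : realType) m (a0 : 'rV[int]_m) (s : seq 'rV[int]_m) :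
  \rank (dmx R a0 s) = size s -> affdim_ge (@in_conv R _ (a0 :: s)) (size s).
Proof.
move=> Hr; exists (fun k : 'I_(size s).+1 => rvR R (nth 0 (a0 :: s) k)); split.
  by move=> k; apply: in_conv_vertex.
rewrite -[in RHS]Hr; congr (\rank _); apply/matrixP => i j; rewrite !mxE /=.
by [].
Qed.

Lemma adim_conv (R : realType) m (a0 : 'rV[int]_m) (s : seq 'rV[int]_m) :
  \rank (dmx R a0 s) = size s -> adim (@in_conv R _ (a0 :: s)) (size s).
Proof. by move=> Hr; split; [apply: affdim_conv | apply: not_affdim_conv]. Qed.


Definition Mi m (a : 'I_m.+1 -> 'rV[int]_m) : 'M[int]_m :=
  \matrix_(i < m, j < m) (a (lift ord0 i) 0 j - a ord0 0 j).

Definition Mr (R : realType) m (a : 'I_m.+1 -> 'rV[int]_m) : 'M[R]_m :=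
  map_mx (fun z : int => z%:~R) (Mi a).

Lemma row_Mr (R : realType) m (a : 'I_m.+1 -> 'rV[int]_m) l :
  row l (Mr R a) = rvR R (a (lift ord0 l)) - rvR R (a ord0).
Proof. by apply/rowP => j; rewrite !mxE intrB. Qed.

Lemma Mr_free (R : realType) m (a : 'I_m.+1 -> 'rV[int]_m) :
  `|\det (Mi a)| = 1 -> row_free (Mr R a).
Proof.
move=> hd; rewrite row_free_unit unitmxE unitfE /Mr.
rewrite det_map_mx intr_eq0.
by apply/eqP => h; move: hd; rewrite h normr0.
Qed.

Lemma AI (R : realType) m (a : 'I_m.+1 -> 'rV[int]_m) (mu : 'I_m.+1 -> R) :
  `|\det (Mi a)| = 1 ->
  \sum_k mu k *: rvR R (a k) = 0 -> \sum_k mu k = 0 -> forall k, mu k = 0.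
Proof.
move=> hd; rewrite !big_ord_recl /= => h1 h2.
have hs : \sum_(l < m) mu (lift ord0 l) = - mu ord0 by apply/eqP; rewrite -addr_eq0 addrC h2.
have h3 : (\row_l mu (lift ord0 l)) *m Mr R a = 0 *m Mr R a.
  rewrite mul0mx mulmx_sum_row.
  rewrite (eq_bigr (fun l => mu (lift ord0 l) *: rvR R (a (lift ord0 l)) -
                             mu (lift ord0 l) *: rvR R (a ord0))); last first.
    by move=> l _; rewrite row_Mr mxE scalerBr.
  rewrite sumrB -scaler_suml hs.
  have -> : \sum_(i < m) mu (lift ord0 i) *: rvR R (a (lift ord0 i)) =
            - (mu ord0 *: rvR R (a ord0)) by apply/eqP; rewrite -addr_eq0 addrC h1.
  by rewrite scaleNr subrr.
have h4 := row_free_inj (Mr_free R hd) h3.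
have hl : forall l, mu (lift ord0 l) = 0.
  by move=> l; have := congr1 (fun M : 'M[R]_(1, m) => M 0 l) h4; rewrite !mxE.
have h0 : mu ord0 = 0.
  by apply/eqP; rewrite -oppr_eq0 -hs big1.
by move=> k; case: (unliftP ord0 k) => [l ->|->].
Qed.

Lemma in_conv_map (R : realType) m k (a : 'I_k -> 'rV[int]_m) (p : 'rV[R]_m) :
  in_conv (map a (enum 'I_k)) p ->
  exists w : 'I_k -> R, [/\ forall i, 0 <= w i, \sum_i w i = 1 &
                          p = \sum_i w i *: rvR R (a i)].
Proof.
move=> [w' [w0 w1 hp]].
have sz : size (map a (enum 'I_k)) = k by rewrite size_map size_enum_ord.
pose h := cast_ord (esym sz).
have hb : bijective h by exists (cast_ord sz) => i; apply: val_inj.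
have hn : forall i, nth 0 (map a (enum 'I_k)) (h i) = a i.
  by move=> i; rewrite (nth_map i) ?size_enum_ord //= nth_ord_enum.
exists (fun i => w' (h i)); split => //.
- by rewrite -w1 (reindex h) //; apply: onW_bij.
- rewrite hp (reindex h) /=; last by apply: onW_bij.
  by apply: eq_bigr => i _; rewrite hn.
Qed.

Lemma conv_vertex (R : realType) m (a : 'I_m.+1 -> 'rV[int]_m) (e : 'rV[int]_m) :
  `|\det (Mi a)| = 1 -> in_conv (map a (enum 'I_m.+1)) (rvR R e) -> exists k, e = a k.
Proof.
move=> hd /in_conv_map [w [w0 w1 he]].
pose z : 'rV[int]_m := \det (Mi a) *: ((e - a ord0) *m \adj (Mi a)).
have hdd : \det (Mi a) * \det (Mi a) = 1.
  by rewrite -[LHS]ger0_norm ?normrM ?hd ?mulr1 // -expr2 sqr_ge0.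
have hz : z *m Mi a = e - a ord0.
  by rewrite -scalemxAl -mulmxA mul_adj_mx mul_mx_scalar scalerA hdd scale1r.
have hw : \row_l w (lift ord0 l) = map_mx (fun x : int => x%:~R) z.
  apply: (row_free_inj (Mr_free R hd)).
  rewrite /Mr -map_mxM hz map_mxB mulmx_sum_row.
  rewrite (eq_bigr (fun l => w (lift ord0 l) *: rvR R (a (lift ord0 l)) -
                             w (lift ord0 l) *: rvR R (a ord0))); last first.
    by move=> l _; rewrite row_Mr mxE scalerBr.
  rewrite sumrB -scaler_suml.
  move: he w1; rewrite !big_ord_recl /= => he w1.
  have -> : \sum_(i < m) w (lift ord0 i) = 1 - w ord0 by move: w1; lra.
  have -> : \sum_(i < m) w (lift ord0 i) *: rvR R (a (lift ord0 i)) =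
            rvR R e - w ord0 *: rvR R (a ord0) by rewrite he [RHS]addrC addKr.
  rewrite scalerBl scale1r /rvR.
  by rewrite opprB addrA subrK.
have hzl : forall l, w (lift ord0 l) = (z 0 l)%:~R.
  by move=> l; have := congr1 (fun M : 'M[R]_(1, m) => M 0 l) hw; rewrite !mxE.
have hz0 : forall l, (0 <= z 0 l)%R by move=> l; rewrite -(ler0z R) -hzl.
have hsum : (\sum_l z 0 l <= 1)%R.
  have : 0 <= w ord0 := w0 ord0.
  move: w1; rewrite big_ord_recl => w1.
  have -> : w ord0 = 1 - \sum_(i < m) w (lift ord0 i) by move: w1; lra.
  rewrite subr_ge0 (eq_bigr _ (fun l _ => hzl l)) -rmorph_sum /=.
  by rewrite -(ler_int R).
case: (pselect (exists l, z 0 l != 0)) => [[l hl]|hn].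
  have hzl1 : z 0 l = 1.
    have := hz0 l; have : (z 0 l <= 1)%R.
      apply: le_trans hsum; rewrite (bigD1 l) //= lerDl.
      by apply: sumr_ge0 => i _; apply: hz0.
    by move: hl; lia.
  have hoth : forall l', l' != l -> z 0 l' = 0.
    move=> l' hl'; move: hsum; rewrite (bigD1 l) //= (bigD1 l') //= hzl1.
    set S := (X in (_ + (_ + X) <= _)%R).
    have : (0 <= S)%R by apply: sumr_ge0 => i _; apply: hz0.
    by have := hz0 l'; lia.
  have hzd : z = delta_mx 0 l.
    apply/rowP => j; rewrite [RHS]mxE eqxx /=.
    by case: (eqVneq j l) => [->|/hoth ->].
  exists (lift ord0 l); apply/rowP => j.
  have := congr1 (fun M : 'M[int]_(1, m) => M 0 j) hz.
  rewrite hzd -rowE !mxE => h.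
  by apply: (addIr (- a ord0 0 j)); rewrite h.
have hz0' : z = 0.
  apply/rowP => j; rewrite [RHS]mxE; case: (eqVneq (z 0 j) 0) => // hj.
  by case: hn; exists j.
exists ord0; apply/eqP; by rewrite -subr_eq0 -hz hz0' mul0mx.
Qed.

Lemma sum_delta (R : realType) (V : lmodType R) k (x : 'I_k) (F : 'I_k -> V) :
  \sum_(i < k) ((x == i)%:R : R) *: F i = F x.
Proof.
rewrite (bigD1 x) //= eqxx scale1r big1 ?addr0 // => i hi.
by rewrite eq_sym (negbTE hi) scale0r.
Qed.

Lemma sum_delta1 (R : realType) k (x : 'I_k) :
  \sum_(i < k) ((x == i)%:R : R) = 1.
Proof.
rewrite (bigD1 x) //= eqxx big1 ?addr0 // => i hi.
by rewrite eq_sym (negbTE hi).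
Qed.

Lemma indep (R : realType) m (a : 'I_m.+1 -> 'rV[int]_m) a0 s :
  `|\det (Mi a)| = 1 -> uniq (a0 :: s) -> (forall e, e \in a0 :: s -> exists k, e = a k) ->
  \rank (dmx R a0 s) = size s.
Proof.
move=> hd hu hin.
pose s0 := a0 :: s.
pose sg i := odflt ord0 [pick k | a k == nth 0 s0 i].
have hsg : forall i, (i < size s0)%N -> a (sg i) = nth 0 s0 i.
  move=> i hi; rewrite /sg; case: pickP => [k /eqP //|hn].
  have [k hk] := hin _ (mem_nth 0 hi).
  by have := hn k; rewrite -hk eqxx.
have hsgi : forall i j, (i < size s0)%N -> (j < size s0)%N -> (sg i == sg j) = (i == j).
  move=> i j hi hj; apply/idP/idP => [/eqP h|/eqP -> //].
  by rewrite -(nth_uniq 0 hi hj hu) -hsg // -hsg // h.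
have key : forall c : 'rV[R]_(size s), c *m dmx R a0 s = 0 -> c = 0.
  move=> c hc.
  pose mu k := \sum_(l < size s) c 0 l * (((sg l.+1 == k) : nat)%:R - ((sg 0%N == k) : nat)%:R).
  have h1 : \sum_k mu k *: rvR R (a k) = c *m dmx R a0 s.
    rewrite mulmx_sum_row.
    rewrite (eq_bigr (fun k => \sum_(l < size s) (c 0 l * (((sg l.+1 == k) : nat)%:R
                 - ((sg 0%N == k) : nat)%:R)) *: rvR R (a k))); last first.
      by move=> k _; rewrite scaler_suml.
    rewrite exchange_big /=; apply: eq_bigr => l _.
    rewrite (eq_bigr (fun k => c 0 l *: ((((sg l.+1 == k) : nat)%:R : R) *: rvR R (a k) -
                 (((sg 0%N == k) : nat)%:R : R) *: rvR R (a k)))); last first.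
      by move=> k _; rewrite -scalerA scalerBl.
    rewrite -scaler_sumr sumrB !sum_delta hsg ?hsg //= ?ltnS //.
    by congr (_ *: _); apply/rowP => j; rewrite !mxE.
  rewrite hc in h1.
  have h2 : \sum_k mu k = 0.
    rewrite /mu exchange_big /= big1 // => l _.
    by rewrite -mulr_sumr sumrB !sum_delta1 subrr mulr0.
  have hmu := AI hd h1 h2.
  apply/rowP => l0; rewrite [RHS]mxE.
  have := hmu (sg l0.+1); rewrite /mu.
  rewrite (eq_bigr (fun l => c 0 l * ((l0 == l) : nat)%:R)); last first.
    move=> l _; rewrite !hsgi //= ?ltnS //.
    by rewrite eqSS eq_sym subr0.
  rewrite (bigD1 l0) //= eqxx mulr1 big1 ?addr0 // => l hl.
  by rewrite eq_sym (negbTE hl) mulr0.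
apply/eqP; rewrite -[_ == _]/(row_free _) -kermx_eq0.
apply/eqP/row_matrixP => i; rewrite row0; apply: key.
by rewrite -row_mul mulmx_ker row0.
Qed.


Lemma count_lt (T : eqType) (a b : pred T) (s : seq T) :
  (forall x, a x -> b x) -> (exists2 x, x \in s & b x && ~~ a x) ->
  (count a s < count b s)%N.
Proof.
move=> hab; elim: s => [|y s IH] [x]; first by [].
rewrite in_cons /= => /orP[/eqP ->|hx] hba.
  case/andP: hba => -> /negbTE -> /=; rewrite add0n add1n ltnS.
  by apply: sub_count => z; apply: hab.
have := IH (ex_intro2 _ _ x hx hba).
case ha : (a y); first by rewrite (hab _ ha) /= !add1n ltnS.
by case: (b y) => /=; rewrite ?add1n ?add0n // => h; apply: ltnW.
Qed.

Definition cnt (R : realType) m (f : tpoly R m) (y : 'rV[R]_m) : nat :=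
  count (fun e => `[< in_conv (act f y) (rvR R e) >]) (tp_supp f).

Lemma in_conv_mem (R : realType) m (s : seq 'rV[int]_m) e :
  e \in s -> in_conv s (rvR R e).
Proof. by move=> he; rewrite -(nth_index 0 he); apply: in_conv_vertex; rewrite index_mem. Qed.

Lemma not_max_cnt (R : realType) m (f : tpoly R m) y :
  ~ maximal_dual_cell f y ->
  exists z, (forall p, dual_cell f y p -> dual_cell f z p) /\ (cnt f y < cnt f z)%N.
Proof.
rewrite /maximal_dual_cell => /existsNP [z /not_implyP [hyz hzy]].
exists z; split => //.
case: (pselect (exists2 e, e \in act f z & ~ in_conv (act f y) (rvR R e))) => [[e he hne]|hn].
  apply: count_lt.
    by move=> e' /asboolP he'; apply/asboolP; apply: hyz.
  exists e; first by move: he; rewrite mem_act => /andP[].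
  apply/andP; split; first by apply/asboolP; apply: in_conv_mem.
  by apply/asboolP.
exfalso; apply: hzy => p; apply: in_conv_trans => e he.
by apply: contra_notP hn => hne; exists e.
Qed.

Lemma cnt_le (R : realType) m (f : tpoly R m) y : (cnt f y <= size (tp_supp f))%N.
Proof. exact: count_size. Qed.

Lemma exists_max (R : realType) m (f : tpoly R m) x :
  exists y, (forall p, dual_cell f x p -> dual_cell f y p) /\ maximal_dual_cell f y.
Proof.
suff H : forall k y, (size (tp_supp f) - cnt f y <= k)%N ->
    (forall p, dual_cell f x p -> dual_cell f y p) ->
    exists y', (forall p, dual_cell f x p -> dual_cell f y' p) /\ maximal_dual_cell f y'.
  exact: (H _ x (leqnn _) (fun p hp => hp)).
elim=> [|k IH] y hk hxy;
  (case: (pselect (maximal_dual_cell f y)) => [hm|/not_max_cnt [z [hyz hlt]]]; first by exists y).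
  by have := cnt_le f z; move: hk hlt; lia.
apply: (IH z); last by move=> p /hxy /hyz.
by have := cnt_le f z; move: hk hlt; lia.
Qed.

Lemma smooth_rank (R : realType) m (f : tpoly R m) x a0 s :
  smooth f -> act f x = a0 :: s -> \rank (dmx R a0 s) = size s.
Proof.
move=> hs hx.
have [y [hxy hmax]] := exists_max f x.
have [a [ha hconv hdet]] := hs y hmax.
have hd : `|\det (Mi a)| = 1 by [].
apply: (@indep R _ a a0 s hd); first by rewrite -hx act_uniq.
move=> e he; apply: (conv_vertex (R := R) hd).
apply/hconv/hxy; rewrite /dual_cell hx; exact: in_conv_mem.
Qed.


Lemma affdim1 (R : realType) m (P : 'rV[R]_m -> Prop) x y :
  P x -> P y -> x <> y -> affdim_ge P 1.
Proof.
move=> hx hy hxy.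
exists (fun k : 'I_2 => if (k : nat) == 0%N then x else y); split.
  by move=> k; case: ifP.
set M := \matrix_(i < 1, j < m) _.
have h1 := rank_leq_row M.
suff : \rank M != 0%N by move: h1; lia.
rewrite mxrank_eq0; apply/eqP => h.
apply: hxy; apply/rowP => j.
have := congr1 (fun M : 'M[R]_(1, m) => M 0 j) h; rewrite !mxE lift0 /=.
by move/eqP; rewrite subr_eq0 => /eqP.
Qed.

Lemma local_all (R : realType) n m (F : 'I_n -> tpoly R m) (v w : 'rV[R]_m) :
  exists2 e : R, 0 < e & forall i a,
    (a \in act (F i) (v + e *: w)) =
    (a \in act (F i) v) && all (fun b => tdot b w <= tdot a w) (act (F i) v).
Proof.
have H : forall i, i \in enum 'I_n -> exists2 d : R, 0 < d & forall e, 0 < e -> e <= d ->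
   (fun i e => forall a, (a \in act (F i) (v + e *: w)) =
    (a \in act (F i) v) && all (fun b => tdot b w <= tdot a w) (act (F i) v)) i e.
  by move=> i _; apply: act_local.
have [d d0 Hd] := ev_seq H.
by exists d => // i a; apply: Hd => //; rewrite mem_enum.
Qed.

Definition Pt (R : realType) n m (A : 'I_n -> seq 'rV[int]_m) (T : 'I_n -> 'rV[int]_m -> R)
  : seq ('rV[int]_m * R) :=
  flatten [seq [seq (b - head 0 (A i), T i b) | b <- behead (A i)] | i <- enum 'I_n].

Definition Ms (R : realType) n m (A : 'I_n -> seq 'rV[int]_m) (T : 'I_n -> 'rV[int]_m -> R)
  : 'M[R]_(size (Pt A T), m) :=
  \matrix_(k, j) rvR R (nth (0, 0) (Pt A T) k).1 0 j.

Lemma size_Pt (R : realType) n m (A : 'I_n -> seq 'rV[int]_m) (T : 'I_n -> 'rV[int]_m -> R) :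
  size (Pt A T) = (\sum_i (size (A i)).-1)%N.
Proof.
rewrite /Pt size_flatten /shape -map_comp sumnE big_map big_enum /=.
by apply: eq_bigr => i _; rewrite size_map size_behead.
Qed.

Lemma mem_Pt (R : realType) n m (A : 'I_n -> seq 'rV[int]_m) (T : 'I_n -> 'rV[int]_m -> R) i b :
  b \in behead (A i) -> (b - head 0 (A i), T i b) \in Pt A T.
Proof.
move=> hb; apply/flattenP; exists [seq (b - head 0 (A i), T i b) | b <- behead (A i)].
  by apply/mapP; exists i; rewrite ?mem_enum.
by apply/mapP; exists b.
Qed.

Lemma Ms_mul (R : realType) n m (A : 'I_n -> seq 'rV[int]_m) (T : 'I_n -> 'rV[int]_m -> R)
  (w : 'rV[R]_m) k : (Ms A T *m w^T) k 0 = tdot (nth (0, 0) (Pt A T) k).1 w.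
Proof. by rewrite mxE /tdot; apply: eq_bigr => j _; rewrite !mxE. Qed.

Lemma Ms_ker (R : realType) n m (A : 'I_n -> seq 'rV[int]_m) (T : 'I_n -> 'rV[int]_m -> R) :
  (\rank (Ms A T) < m)%N ->
  exists2 u : 'rV[R]_m, u != 0 & forall p, p \in Pt A T -> tdot p.1 u = 0.
Proof.
move=> hr; set K := kermx (Ms A T)^T.
have hK : K != 0.
  by rewrite -mxrank_eq0 mxrank_ker mxrank_tr -lt0n subn_gt0.
have [i hi] : exists i, row i K != 0.
  apply/existsP; rewrite -negb_forall; apply: contra hK => /forallP h.
  by apply/eqP/row_matrixP => i; rewrite row0; apply/eqP.
exists (row i K) => // p hp.
have h0 : Ms A T *m (row i K)^T = 0.
  by rewrite -[Ms A T]trmxK -trmx_mul -row_mul mulmx_ker row0 trmx0.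
have hk : (index p (Pt A T) < size (Pt A T))%N by rewrite index_mem.
have := congr1 (fun M : 'M[R]_(size (Pt A T), 1) => M (Ordinal hk) 0) h0.
by rewrite Ms_mul mxE /= nth_index.
Qed.

Lemma Ms_surj (R : realType) n m (A : 'I_n -> seq 'rV[int]_m) (T : 'I_n -> 'rV[int]_m -> R) :
  \rank (Ms A T) = size (Pt A T) ->
  exists w : 'rV[R]_m, forall p, p \in Pt A T -> tdot p.1 w = p.2.
Proof.
move=> hr.
pose t : 'rV[R]_(size (Pt A T)) := \row_k (nth (0, 0) (Pt A T) k).2.
have hf : row_full (Ms A T)^T by rewrite /row_full mxrank_tr hr.
have [D hD] := submxP (submx_full t hf).
exists D => p hp.
have hk : (index p (Pt A T) < size (Pt A T))%N by rewrite index_mem.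
have := congr1 (fun M : 'M[R]_(1, size (Pt A T)) => M 0 (Ordinal hk)) hD.
rewrite mxE /= nth_index // => ->.
by rewrite -[in RHS](trmxK D) -trmx_mul mxE Ms_mul /= nth_index.
Qed.


Lemma comb n (s : 'I_n -> nat) :
  (forall i, 2 <= s i)%N -> (\sum_i (s i).-1 = n.+1)%N ->
  exists j, s j = 3%N /\ forall i, i != j -> s i = 2%N.
Proof.
move=> h2 hs.
have ht : (\sum_i (s i).-2 = 1)%N.
  have : (\sum_i (s i).-1 = \sum_i (s i).-2 + \sum_(i < n) 1)%N.
    rewrite -big_split /=.
    by apply: eq_bigr => i _; have := h2 i; lia.
  by rewrite sum1_card card_ord hs; lia.
case: (pickP (fun i => (s i).-2 != 0%N)) => [j hj|hn]; last first.
  by move: ht; rewrite big1 // => i _; have := hn i; move/negbFE/eqP.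
exists j.
move: ht; rewrite (bigD1 j) //= => ht.
have hr : (\sum_(i | i != j) (s i).-2 = 0)%N.
  move: hj ht; set x := (s j).-2; set y := bigop _ _ _; lia.
have hr' := hr; move/eqP: hr'; rewrite sum_nat_eq0 => /forallP hr'.
split.
  move: hj ht; rewrite hr addn0; have := h2 j; lia.
move=> i hi; have := implyP (hr' i) hi; have := h2 i; lia.
Qed.

Lemma cellJ_ext (R : realType) n m (F : 'I_n -> tpoly R m) x y :
  (forall i, act (F i) x =i act (F i) y) -> cellJ F setT x = cellJ F setT y.
Proof.
move=> h; apply: funext => z; apply: propext; split => hz i hi e he; apply: (hz i hi).
  by rewrite h.
by rewrite -h.
Qed.

Lemma cellJ_refl (R : realType) n m (F : 'I_n -> tpoly R m) J x : cellJ F J x x.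
Proof. by move=> i _ e. Qed.

Lemma cellJ_eq_sub (R : realType) n m (F : 'I_n -> tpoly R m) x y :
  cellJ F setT x = cellJ F setT y -> forall i, {subset act (F i) x <= act (F i) y}.
Proof.
move=> h i; have : cellJ F setT x y by rewrite h; apply: cellJ_refl.
by move/(_ i (in_setT i)).
Qed.

Lemma size_eqi (T : eqType) (s1 s2 : seq T) : uniq s1 -> uniq s2 -> s1 =i s2 -> size s1 = size s2.
Proof. by move=> u1 u2 h; apply: perm_size; apply: uniq_perm. Qed.

Lemma edge_of (R : realType) n m (F : 'I_n -> tpoly R m) (v x : 'rV[R]_m) j (S : seq 'rV[int]_m) :
  (forall y, inIJ F setT y -> ~ affdim_ge (cellJ F setT y) 2) ->
  (forall i, i != j -> act (F i) x =i act (F i) v) ->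
  (forall i, 2 <= size (act (F i) v))%N ->
  act (F j) x =i S -> uniq S -> size S = 2%N -> {subset S <= act (F j) v} ->
  (exists2 e, e \in act (F j) v & e \notin S) ->
  is_edge F (cellJ F setT x) /\ cellJ F setT x v.
Proof.
move=> hdim hoth h2 hj uS sS hSv [e ev eS].
have hsub : cellJ F setT x v.
  move=> i _ a; case: (eqVneq i j) => [->|hij]; first by rewrite hj => /hSv.
  by rewrite hoth.
split => //.
have hin : inIJ F setT x.
  move=> i _; rewrite /inV; case: (eqVneq i j) => [->|hij].
    by rewrite (size_eqi (act_uniq _ _) uS hj) sS.
  by rewrite (size_eqi (act_uniq _ _) (act_uniq _ _) (hoth i hij)); apply: h2.
exists x; split => //; split; last exact: hdim.

apply: (@affdim1 R m (cellJ F setT x) x v (@cellJ_refl R n m F setT x) hsub) => hxv.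
by move: ev; rewrite -hxv hj (negbTE eS).
Qed.


Lemma mk_pt (R : realType) n m (F : 'I_n -> tpoly R m) v j a b c :
  (forall T : 'I_n -> 'rV[int]_m -> R, \rank (Ms (fun i => act (F i) v) T) = size (Pt (fun i => act (F i) v) T)) ->
  act (F j) v = [:: a; b; c] -> b != c ->
  (forall i, i != j -> size (act (F i) v) = 2%N) ->
  forall t1 t2 : R, exists x, [/\ forall i, i != j -> act (F i) x =i act (F i) v,
     forall e, e \in act (F j) x -> e \in act (F j) v,
     (a \in act (F j) x) = (t1 <= 0) && (t2 <= 0),
     (b \in act (F j) x) = (0 <= t1) && (t2 <= t1) &
     (c \in act (F j) x) = (0 <= t2) && (t1 <= t2)].
Proof.
move=> hr Ej hbc hs2 t1 t2.
pose A := fun i => act (F i) v.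
pose T := fun i e => if i == j then (if e == b then t1 else t2) else 0.
have [w hw] := Ms_surj (hr T).
have hoth : forall i, i != j -> forall e, e \in A i -> tdot e w = tdot (head 0 (A i)) w.
  move=> i hij e; have := hs2 i hij; rewrite /A.
  case E : (act (F i) v) => [|h [|q [|]]] //= _.
  rewrite !inE => /orP[/eqP->//|/eqP->].
  have hq : q \in behead (A i) by rewrite /A E inE.
  have := hw _ (mem_Pt T hq); rewrite /= /T (negbTE hij) tdotBl /A E /=.
  by move/eqP; rewrite subr_eq0 => /eqP.
have hb : b \in behead (A j) by rewrite /A Ej !inE eqxx.
have hc : c \in behead (A j) by rewrite /A Ej !inE eqxx orbT.
have hja : tdot b w = tdot a w + t1.
  have := hw _ (mem_Pt T hb); rewrite /= /T eqxx eqxx tdotBl /A Ej /= => <-.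
  by rewrite addrC subrK.
have hjc : tdot c w = tdot a w + t2.
  have := hw _ (mem_Pt T hc); rewrite /= /T eqxx eq_sym (negbTE hbc) tdotBl /A Ej /= => <-.
  by rewrite addrC subrK.
have [e e0 he] := local_all F v w.
exists (v + e *: w); split.
- move=> i hij e'; rewrite he; case he' : (e' \in act (F i) v) => //=.
  apply/allP => b' hb'; rewrite (hoth i hij b' hb') (hoth i hij e' he').
  by rewrite le_refl.
- by move=> e'; rewrite he => /andP[].
- rewrite he Ej /= !inE eqxx /= hja hjc le_refl /= andbT.
  by rewrite gerDl gerDl.
- rewrite he Ej /= !inE eqxx orbT /= hja hjc andbT.
  by rewrite le_refl lerDl lerD2l.
- rewrite he Ej /= !inE eqxx !orbT /= hja hjc andbT.
  by rewrite lerDl lerD2l le_refl andbT.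
Qed.


Lemma sub2_eqi (T : eqType) (s S : seq T) :
  uniq s -> uniq S -> size S = 2%N -> (2 <= size s)%N -> {subset s <= S} -> s =i S.
Proof. by move=> us uS sS h2 hsub; apply: (uniq_min_size us hsub _).2; rewrite sS. Qed.

Theorem lemma3p1 (R : realType) (n : nat) (F : 'I_n -> tpoly R n.+1) :
  (2 <= n)%N ->
  (forall i, smooth (F i)) ->
  transversal_inter F ->
  forall v : 'rV[R]_n.+1, is_vertex F v ->
    exists E1 E2 E3 : 'rV[R]_n.+1 -> Prop,
      [/\ is_edge F E1, is_edge F E2 & is_edge F E3] /\
      [/\ E1 v, E2 v & E3 v] /\
      [/\ E1 <> E2, E1 <> E3 & E2 <> E3] /\
      (forall E, is_edge F E -> E v -> E = E1 \/ E = E2 \/ E = E3).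
Proof.
move=> hn hsm htr v [hv [_ hv1]].
have h2 : forall i, (2 <= size (act (F i) v))%N := fun i => hv i (in_setT i).
have hcard : #|[set: 'I_n]| = n by rewrite cardsT card_ord.
have [hcd htd] := htr setT ltac:(by rewrite hcard).
have hdim2 : forall y, inIJ F setT y -> ~ affdim_ge (cellJ F setT y) 2.
  by move: hcd => [_ h]; rewrite hcard subSnn in h.
have hadim : forall i, adim (dual_cell (F i) v) (size (act (F i) v)).-1.
  move=> i; rewrite /dual_cell; case E : (act (F i) v) => [|a0 s].
    by have := h2 i; rewrite E.
  exact: adim_conv (smooth_rank (hsm i) E).
have hle : (\sum_i (size (act (F i) v)).-1 <= n.+1)%N.
  have := htd v hv (fun i => (size (act (F i) v)).-1) (fun i _ => hadim i).
  case=> /affdim_le.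
  by rewrite (eq_bigl (fun _ => true)) // => i; rewrite in_setT.
have hr : forall T : 'I_n -> 'rV[int]_n.+1 -> R,
    \rank (Ms (fun i => act (F i) v) T) = n.+1.
  move=> T; have hc := rank_leq_col (Ms (fun i => act (F i) v) T).
  case: (ltnP (\rank (Ms (fun i => act (F i) v) T)) n.+1) => [hlt|hge]; last first.
    by apply/eqP; rewrite eqn_leq hc hge.
  exfalso; have [u hu hPu] := Ms_ker hlt.
  have hu' : forall i e, e \in act (F i) v -> tdot e u = tdot (head 0 (act (F i) v)) u.
    move=> i e; case E : (act (F i) v) => [//|h t] /=; rewrite inE => /orP[/eqP->//|het].
    have het' : e \in behead ((fun i => act (F i) v) i) by rewrite /= E.
    have := hPu _ (mem_Pt T het'); rewrite /= tdotBl E /=.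
    by move/eqP; rewrite subr_eq0 => /eqP.
  have [e e0 he] := local_all F v u.
  apply: hv1; apply: (@affdim1 R _ (cellJ F setT v) v (v + e *: u) (@cellJ_refl R n _ F setT v)).
    move=> i _ a ha; rewrite he ha /=; apply/allP => b hb.
    by rewrite (hu' i b hb) (hu' i a ha).
  move/(congr1 (fun y => y - v)); rewrite subrr addrC addKr => /esym/eqP.
  by rewrite scaler_eq0 (gt_eqF e0) /= (negbTE hu).
have hge : (n.+1 <= \sum_i (size (act (F i) v)).-1)%N.
  have := rank_leq_row (Ms (fun i => act (F i) v) (fun (_ : 'I_n) (_ : 'rV[int]_n.+1) => (0 : R))).
  by rewrite hr size_Pt.
have hsum : (\sum_i (size (act (F i) v)).-1 = n.+1)%N by apply/eqP; rewrite eqn_leq hle hge.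
have [j [hj3 hj2]] := comb h2 hsum.
move: hj3; case Ej : (act (F j) v) => [|a [|b [|c [|]]]] //= _.
have uj : uniq [:: a; b; c] by rewrite -Ej act_uniq.
move: (uj); rewrite /= !inE negb_or => /andP[/andP[hab hac] /andP[hbc _]].
have hr' : forall T : 'I_n -> 'rV[int]_n.+1 -> R,
   \rank (Ms (fun i => act (F i) v) T) = size (Pt (fun i => act (F i) v) T).
  by move=> T; rewrite hr size_Pt hsum.
have mk := mk_pt hr' Ej hbc hj2.
have [x1 [o1 s1 a1 b1 c1]] := mk 0 (-1).
have [x2 [o2 s2 a2 b2 c2]] := mk (-1) 0.
have [x3 [o3 s3 a3 b3 c3]] := mk 1 1.
have hsj : forall x e, (forall e, e \in act (F j) x -> e \in act (F j) v) ->
    e \in act (F j) x -> [|| e == a, e == b | e == c].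
  by move=> x e hs /hs; rewrite Ej !inE.
have e1 : act (F j) x1 =i [:: a; b].
  move=> e; rewrite !inE; apply/idP/idP.
    move=> he; case/or3P: (hsj _ _ s1 he) => [->|->|/eqP hec] //; first by rewrite orbT.
    by move: he; rewrite hec c1 => /andP[]; lra.
  case/orP => /eqP ->; [rewrite a1 | rewrite b1]; apply/andP; split; lra.
have e2 : act (F j) x2 =i [:: a; c].
  move=> e; rewrite !inE; apply/idP/idP.
    move=> he; case/or3P: (hsj _ _ s2 he) => [->|/eqP hec|->] //; last by rewrite orbT.
    by move: he; rewrite hec b2 => /andP[]; lra.
  case/orP => /eqP ->; [rewrite a2 | rewrite c2]; apply/andP; split; lra.
have e3 : act (F j) x3 =i [:: b; c].
  move=> e; rewrite !inE; apply/idP/idP.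
    move=> he; case/or3P: (hsj _ _ s3 he) => [/eqP hec|->|->] //; last by rewrite orbT.
    by move: he; rewrite hec a3 => /andP[]; lra.
  case/orP => /eqP ->; [rewrite b3 | rewrite c3]; apply/andP; split; lra.
have hinv : forall e, e \in [:: a; b; c] -> e \in act (F j) v by move=> e; rewrite Ej.
have hav : a \in act (F j) v by rewrite Ej !inE eqxx.
have hbv : b \in act (F j) v by rewrite Ej !inE eqxx !orbT.
have hcv : c \in act (F j) v by rewrite Ej !inE eqxx !orbT.
have hcn : c \notin [:: a; b] by rewrite !inE negb_or ![c == _]eq_sym hac hbc.
have hbn : b \notin [:: a; c] by rewrite !inE negb_or eq_sym hab hbc.
have han : a \notin [:: b; c] by rewrite !inE negb_or hab hac.
have u1 : uniq [:: a; b] by rewrite /= inE hab.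
have u2 : uniq [:: a; c] by rewrite /= inE hac.
have u3 : uniq [:: b; c] by rewrite /= inE hbc.
have sb1 : {subset [:: a; b] <= act (F j) v}.
  by move=> e; rewrite !inE => /orP[/eqP->|/eqP->].
have sb2 : {subset [:: a; c] <= act (F j) v}.
  by move=> e; rewrite !inE => /orP[/eqP->|/eqP->].
have sb3 : {subset [:: b; c] <= act (F j) v}.
  by move=> e; rewrite !inE => /orP[/eqP->|/eqP->].
have [ed1 ev1] := edge_of hdim2 o1 h2 e1 u1 erefl sb1 (ex_intro2 _ _ c hcv hcn).
have [ed2 ev2] := edge_of hdim2 o2 h2 e2 u2 erefl sb2 (ex_intro2 _ _ b hbv hbn).
have [ed3 ev3] := edge_of hdim2 o3 h2 e3 u3 erefl sb3 (ex_intro2 _ _ a hav han).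
exists (cellJ F setT x1), (cellJ F setT x2), (cellJ F setT x3).
split; first by split.
split; first by split.
split.
  split => h.
  - have := @cellJ_eq_sub _ _ _ F _ _ h j b; rewrite e1 e2 !inE eqxx orbT => /(_ isT).
    by rewrite eq_sym (negbTE hab) (negbTE hbc).
  - have := @cellJ_eq_sub _ _ _ F _ _ h j a; rewrite e1 e3 !inE eqxx => /(_ isT).
    by rewrite (negbTE hab) (negbTE hac).
  - have := @cellJ_eq_sub _ _ _ F _ _ h j a; rewrite e2 e3 !inE eqxx => /(_ isT).
    by rewrite (negbTE hab) (negbTE hac).
move=> E [x' [hx' -> hE]] hEv.
have hsub : forall i, {subset act (F i) x' <= act (F i) v} := fun i => hEv i (in_setT i).
have ho : forall i, i != j -> act (F i) x' =i act (F i) v.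
  move=> i hij; apply: (uniq_min_size (act_uniq _ _) (hsub i) _).2.
  by rewrite (hj2 i hij); apply: hx'; rewrite in_setT.
have hx'2 : (2 <= size (act (F j) x'))%N by apply: hx'; rewrite in_setT.
have hsj' : forall e, e \in act (F j) x' -> [|| e == a, e == b | e == c].
  by move=> e /hsub; rewrite Ej !inE.
have ext : forall x, (forall i, i != j -> act (F i) x =i act (F i) v) ->
    act (F j) x' =i act (F j) x -> cellJ F setT x' = cellJ F setT x.
  move=> x hox hjx; apply: cellJ_ext => i; case: (eqVneq i j) => [->//|hij] e.
  by rewrite ho // hox.
case hc : (c \in act (F j) x').
  case hb : (b \in act (F j) x').
    case ha : (a \in act (F j) x').
      exfalso; apply: hv1.
      have := hE.1; rewrite (@cellJ_ext R n n.+1 F x' v); first by [].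
      move=> i; case: (eqVneq i j) => [->|hij]; last exact: ho.
      move=> e; rewrite Ej !inE; apply/idP/idP; first exact: hsj'.
      by case/or3P => /eqP ->.
    right; right; apply: ext => // e; rewrite e3.
    apply: (sub2_eqi (act_uniq _ _) u3 erefl hx'2).
    move=> e' he'; rewrite !inE; case/or3P: (hsj' _ he') => [/eqP h|->|->]; rewrite ?orbT //.
    by rewrite h ha in he'.
  right; left; apply: ext => // e; rewrite e2.
  apply: (sub2_eqi (act_uniq _ _) u2 erefl hx'2).
  move=> e' he'; rewrite !inE; case/or3P: (hsj' _ he') => [->|/eqP h|->]; rewrite ?orbT //.
  by rewrite h hb in he'.
left; apply: ext => // e; rewrite e1.
apply: (sub2_eqi (act_uniq _ _) u1 erefl hx'2).
move=> e' he'; rewrite !inE; case/or3P: (hsj' _ he') => [->|->|/eqP h]; rewrite ?orbT //.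
by rewrite h hc in he'.
Qed.
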